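(* For every $T_D$-algebra $M$, the space $\mathrm{at}\,M$ is homeomorphic to $\mathrm{pt}_D\mathcal O M$.
   Context: An MT-algebra is a pair $(M,\square)$ where $M$ is a complete boolean algebra and $\square:M\to M$ satisfies $\square 1=1$, $\square(a\wedge b)=\square a\wedge\square b$, $\square a\le a$, $\square a\le\square\square a$; $\Diamond a=\neg\square\neg a$; open: $\square a=a$; locally closed: $a=\square b\wedge\Diamond c$ for some $b,c$. $\mathcal O M$ is the frame of open elements. $M$ is a $T_D$-algebra if every element is a join of locally closed elements. $\mathrm{at}\,M$ is the set of atoms of $M$ with topology $\{\eta_M(u):u\in\mathcal O M\}$ where $\eta_M(a)=\{x\in\mathrm{at}\,M:x\le a\}$. For a frame $L$ and elements $a<b$, $a\lessdot b$ means no $x$ with $a<x<b$; a filter $F$ of $L$ is slicing if it is prime and there are $b\in F$, $a\notin F$ with $a\lessdot b$; $\mathrm{pt}_D L$ is the set of slicing filters topologized by the opens $\{F: a\in F\}$, $a\in L$. *)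

(* Defs.v *)
(* complete boolean algebras as complete ctbDistrLattices. *)
From mathcomp Require Import all_boot all_order.
Import Order.TTheory.
Set Implicit Arguments. Unset Strict Implicit. Unset Printing Implicit Defensive.
Local Open Scope order_scope.

Section Defs.
Context {d : Order.disp_t} {M : ctbDistrLatticeType d}.

Definition is_lub (A : M -> Prop) (s : M) : Prop :=
  (forall x, A x -> x <= s) /\ (forall u, (forall x, A x -> x <= u) -> s <= u).

Definition complete_lattice : Prop := forall A : M -> Prop, exists s, is_lub A s.

Definition MT_axioms (box : M -> M) : Prop :=
  [/\ box \top = \top,
      (forall a b, box (a `&` b) = box a `&` box b),
      (forall a, box a <= a) &
      (forall a, box a <= box (box a))].

Definition dia (box : M -> M) (a : M) : M := ~` box (~` a).
Definition is_open (box : M -> M) (a : M) : Prop := box a = a.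
Definition locally_closed (box : M -> M) (a : M) : Prop :=
  exists b c, a = box b `&` dia box c.

Definition TD_algebra (box : M -> M) : Prop :=
  forall a, exists A : M -> Prop,
    (forall x, A x -> locally_closed box x) /\ is_lub A a.

Definition atom (x : M) : Prop :=
  \bot < x /\ forall y, y <= x -> y = \bot \/ y = x.

Definition atomT := {x : M | atom x}.

Definition at_open (box : M -> M) (U : atomT -> Prop) : Prop :=
  exists u, is_open box u /\ forall x : atomT, U x <-> proj1_sig x <= u.

(* The frame O M is the set of open elements of M with the induced order;
   its finite meets and binary joins are those of M.  Subsets of O M are
   represented as predicates F on M with F a -> is_open box a. *)
Definition covered (box : M -> M) (a b : M) : Prop :=
  [/\ is_open box a, is_open box b, a < b &
      ~ exists x, [/\ is_open box x, a < x & x < b]].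

Definition filter_OM (box : M -> M) (F : M -> Prop) : Prop :=
  [/\ (forall a, F a -> is_open box a),
      F \top,
      (forall a b, F a -> is_open box b -> a <= b -> F b) &
      (forall a b, F a -> F b -> F (a `&` b))].

Definition prime_filter_OM (box : M -> M) (F : M -> Prop) : Prop :=
  [/\ filter_OM box F, ~ F \bot &
      (forall a b, is_open box a -> is_open box b -> F (a `|` b) -> F a \/ F b)].

Definition slicing (box : M -> M) (F : M -> Prop) : Prop :=
  prime_filter_OM box F /\
  exists a b, [/\ F b, ~ F a & covered box a b].

Definition ptD (box : M -> M) := {F : M -> Prop | slicing box F}.

Definition ptD_open (box : M -> M) (V : ptD box -> Prop) : Prop :=
  exists a, is_open box a /\ forall F : ptD box, V F <-> proj1_sig F a.

End Defs.

Definition homeomorphic {X Y : Type} (OX : (X -> Prop) -> Prop)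
  (OY : (Y -> Prop) -> Prop) : Prop :=
  exists f : X -> Y,
    [/\ bijective f,
        (forall V, OY V -> OX (fun x => V (f x))) &
        (forall U, OX U -> OY (fun y => exists2 x, U x & f x = y))].

(* Main.v *)
Require Import Defs.
From mathcomp Require Import all_boot all_order.
From Stdlib Require Import Classical ClassicalEpsilon FunctionalExtensionality PropExtensionality ProofIrrelevance.
Import Order.Theory.
Set Implicit Arguments. Unset Strict Implicit. Unset Printing Implicit Defensive.
Local Open Scope order_scope.

Section Proofs.
Context {d : Order.disp_t} {M : ctbDistrLatticeType d} (box : M -> M).
Hypothesis Hbox : MT_axioms box.
Hypothesis HTD : TD_algebra box.

Lemma box_le a : box a <= a.
Proof. by case: Hbox. Qed.

Lemma box_meet a b : box (a `&` b) = box a `&` box b.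
Proof. by case: Hbox. Qed.

Lemma box_mono a b : a <= b -> box a <= box b.
Proof. move=> ab; rewrite -(meet_l ab) box_meet; exact: leIr. Qed.

Lemma box_open a : is_open box (box a).
Proof. apply: le_anti; rewrite box_le /=; by case: Hbox. Qed.

Lemma open_meet a b : is_open box a -> is_open box b -> is_open box (a `&` b).
Proof. by rewrite /is_open box_meet => -> ->. Qed.

Lemma open_join a b : is_open box a -> is_open box b -> is_open box (a `|` b).
Proof.
rewrite /is_open => ha hb; apply: le_anti; rewrite box_le /= leUx.
by rewrite -{1}ha -{2}hb !box_mono // ?leUl ?leUr.
Qed.

Lemma open_top : is_open box \top.
Proof. by case: Hbox. Qed.

Lemma bot_of (x y : M) : x <= y -> x <= ~` y -> x = \bot.
Proof. move=> h1 h2; apply/eqP; rewrite -lex0 -(meetxC y) lexI h1 h2. done. Qed.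

Lemma atom_ne (x : M) : atom x -> x <> \bot.
Proof. by case=> h _ e; rewrite e ltxx in h. Qed.

Lemma atom_disj (x a : M) : atom x -> ~ x <= a -> x `&` a = \bot.
Proof.
move=> [h1 h2] nx; case: (h2 (x `&` a) (leIl _ _)) => // e.
by exfalso; apply: nx; rewrite -e leIr.
Qed.

Lemma atom_join (x a b : M) : atom x -> x <= a `|` b -> x <= a \/ x <= b.
Proof.
move=> hx hab; apply: NNPP => hn.
have na : ~ x <= a by move=> h; apply: hn; left.
have nb : ~ x <= b by move=> h; apply: hn; right.
apply: (atom_ne hx); rewrite -(meet_l hab) meetUr (atom_disj hx na) (atom_disj hx nb).
by rewrite joinxx.
Qed.

Lemma atom_lc (x : M) : atom x -> exists u c, is_open box u /\ x = u `&` dia box c.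
Proof.
move=> hx; case: (HTD x) => A [hA [ub lub]].
case: (classic (exists y, A y /\ y = x)) => [[y [Ay e]]|hn].
  case: (hA y Ay) => b [c ey]; exists (box b), c; split; first exact: box_open.
  by rewrite -e.
exfalso; apply: (atom_ne hx); apply/eqP; rewrite -lex0; apply: lub => y Ay.
case: hx => _ h2; case: (h2 y (ub y Ay)) => [->//|e].
by exfalso; apply: hn; exists y.
Qed.

Lemma atoms_disj (x y : M) : atom x -> atom y -> x <> y -> y `&` x = \bot.
Proof.
move=> hx hy nxy; apply: atom_disj => // yx.
case: hx => _ h; case: (h y yx) => e; [exact: (atom_ne hy) | exact: nxy].
Qed.


Lemma atom_data (x : M) : atom x -> exists u a,
  [/\ is_open box u, is_open box a, x <= u, ~ x <= a &
      a <= u /\ (forall w, a <= w -> w <= u -> w = a \/ w = u) /\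
      (forall y, atom y -> y <> x -> y <= u -> y <= a)].
Proof.
move=> hx; case: (atom_lc hx) => u [c [ou ex]].
have ob : is_open box (box (~` c)) by exact: box_open.
exists u, (u `&` box (~` c)); split.
- exact: ou.
- exact: open_meet.
- by rewrite ex leIl.
- move=> h; apply: (atom_ne hx); apply: (@bot_of _ (box (~` c))).
    by move: h; rewrite lexI => /andP[].
  by rewrite ex /dia leIr.
split; first exact: leIl.
split.
- move=> w aw wu.
  have eu : u = x `|` (u `&` box (~` c)).
    by rewrite ex -meetUr /dia joinCx meetx1.
  case: (classic (x <= w)) => xw.
    by right; apply: le_anti; rewrite wu /= eu leUx xw aw.
  left; apply: le_anti; rewrite aw andbT.
  have dw : w `&` x = \bot by rewrite meetC; exact: atom_disj.
  by move: wu; rewrite {1}eu (disjoint_lexUr _ dw).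
- move=> y hy nyx yu; rewrite lexI yu /=.
  have h0 := atoms_disj hx hy (fun e => nyx (esym e)).
  have : y `&` dia box c = \bot.
    by rewrite -h0 ex meetA (meet_l yu).
  move/eqP; rewrite disj_leC /dia complK //.
Qed.


Definition Fx (x : M) : M -> Prop := fun v => is_open box v /\ x <= v.

Lemma slicing_at (x : M) : atom x -> slicing box (Fx x).
Proof.
move=> hx; case: (atom_data hx) => u [a [ou oa xu xa [au [betw _]]]].
split.
  split.
  - split.
    + by move=> v [].
    + by split; [exact: open_top | exact: lex1].
    + by move=> v w [_ xv] ow vw; split => //; exact: le_trans xv vw.
    + by move=> v w [ov xv] [ow xw]; split; [exact: open_meet | rewrite lexI xv xw].
  - by move=> [_ h]; apply: (atom_ne hx); apply/eqP; rewrite -lex0.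
  - move=> v w ov ow [_ h]; case: (atom_join hx h) => h'; [left|right]; by split.
exists a, u; split => //.
  by move=> [].
split => //.
  rewrite lt_neqAle au andbT; apply/eqP => e; apply: xa; by rewrite e.
move=> [w [_ aw wu]]; case: (betw w (ltW aw) (ltW wu)) => e.
  by rewrite e ltxx in aw.
by rewrite e ltxx in wu.
Qed.


Lemma Fx_inj (x y : M) : atom x -> atom y -> Fx x = Fx y -> x = y.
Proof.
move=> hx hy e; apply: NNPP => nxy.
case: (atom_data hx) => u [a [ou oa xu xa [au [_ sep]]]].
case: (classic (y <= u)) => yu.
  have ya := sep y hy (fun e' => nxy (esym e')) yu.
  have : Fx y a by [].
  by rewrite -e => -[_].
have : Fx x u by [].
by rewrite e => -[_].
Qed.

Lemma cover_betw (a b : M) : covered box a b ->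
  forall w, is_open box w -> a <= w -> w <= b -> w = a \/ w = b.
Proof.
move=> [oa ob ab nx] w ow aw wb; apply: NNPP => hn; apply: nx; exists w; split => //.
  by rewrite lt_neqAle aw andbT; apply/eqP => e; apply: hn; left.
by rewrite lt_neqAle wb andbT; apply/eqP => e; apply: hn; right.
Qed.

Section Surj.
Variables (a b : M).
Hypothesis hab : covered box a b.
Let x := b `&` ~` a.

Lemma oa : is_open box a. Proof. by case: hab. Qed.
Lemma ob : is_open box b. Proof. by case: hab. Qed.
Lemma ab : a < b. Proof. by case: hab. Qed.
Let btw := cover_betw hab.

Lemma x_ne : x <> \bot.
Proof.
move=> e; have : b <= a.
  by rewrite -[a]complK -disj_leC; apply/eqP.
by move=> /(lt_le_trans ab); rewrite ltxx.
Qed.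

Lemma x_le_na : x <= ~` a. Proof. exact: leIr. Qed.
Lemma x_le_b : x <= b. Proof. exact: leIl. Qed.

Lemma lc_eq (l : M) : locally_closed box l -> l <> \bot -> l <= x -> l = x.
Proof.
move=> [p [q el]] ln lx.
have lb : l <= b := le_trans lx x_le_b.
have lna : l <= ~` a := le_trans lx x_le_na.
have la : l `&` a = \bot by apply/eqP; rewrite disj_leC.
have lp : l <= box p by rewrite el leIl.
have lq : l <= dia box q by rewrite el leIr.
have ow1 : is_open box (a `|` (b `&` box p)).
  by apply: open_join; [exact: oa | apply: open_meet; [exact: ob | exact: box_open]].
have e1 : a `|` (b `&` box p) = b.
  have s1 : a `|` (b `&` box p) <= b by rewrite leUx (ltW ab) leIl.
  case: (btw ow1 (leUl _ _) s1) => e //.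
  exfalso; apply: ln; apply: (@bot_of _ a); last exact: lna.
  by rewrite -e; apply: lexUr; rewrite lexI lb lp.
have ow2 : is_open box (a `|` (b `&` box p `&` box (~` q))).
  by apply: open_join; [exact: oa | repeat apply: open_meet; try exact: ob; exact: box_open].
have e2 : b `&` box p `&` box (~` q) <= a.
  have s2 : a `|` (b `&` box p `&` box (~` q)) <= b by rewrite leUx (ltW ab) -meetA leIl.
  case: (btw ow2 (leUl _ _) s2) => e.
    by rewrite -e leUr.
  exfalso; apply: ln; apply: (@bot_of _ (box (~` q))); last exact: lq.
  have : l <= a `|` (b `&` box p `&` box (~` q)) by rewrite e.
  by rewrite (disjoint_lexUr _ la) !lexI => /andP[_].
apply: le_anti; rewrite lx /= el lexI.
have xp : x <= box p.
  have : x <= a `|` (b `&` box p) by rewrite e1 x_le_b.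
  have xa : x `&` a = \bot by apply/eqP; rewrite disj_leC x_le_na.
  by rewrite (disjoint_lexUr _ xa) lexI => /andP[].
rewrite xp /= /dia lexC -disj_leC; apply/eqP; apply: (@bot_of _ a).
  apply: le_trans e2; rewrite !lexI leIl andbT.
  by rewrite (le_trans (leIr _ _) x_le_b) (le_trans (leIr _ _) xp).
exact: le_trans (leIr _ _) x_le_na.
Qed.

Lemma x_atom : atom x.
Proof.
split; first by rewrite lt0x; apply/eqP; exact: x_ne.
move=> y yx; case: (classic (y = \bot)) => [->|yn]; first by left.
right; case: (HTD y) => A [hA [ub lub]].
case: (classic (exists z, A z /\ z <> \bot)) => [[z [Az zn]]|hn].
  have zx : z = x := lc_eq (hA z Az) zn (le_trans (ub z Az) yx).
  by apply: le_anti; rewrite yx /= -zx ub.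
exfalso; apply: yn; apply/eqP; rewrite -lex0; apply: lub => z Az.
by case: (classic (z = \bot)) => [->//|zn]; exfalso; apply: hn; exists z.
Qed.

Lemma F_eq (F : M -> Prop) : prime_filter_OM box F -> F b -> ~ F a ->
  forall v, F v <-> Fx x v.
Proof.
move=> [[Fo Ft Fup Fmeet] _ Fpr] Fb Fa v; split.
  move=> Fv; have ov := Fo v Fv; split => //.
  have obv : is_open box (b `&` v) by apply: open_meet => //; exact: ob.
  have ow : is_open box (a `|` (b `&` v)) by apply: open_join => //; exact: oa.
  have s1 : a `|` (b `&` v) <= b by rewrite leUx (ltW ab) leIl.
  case: (btw ow (leUl _ _) s1) => e.
    exfalso; apply: Fa; apply: (Fup (b `&` v)); [exact: Fmeet | exact: oa |].
    by rewrite -e leUr.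
  have xa : x `&` a = \bot by apply/eqP; rewrite disj_leC x_le_na.
  have : x <= a `|` (b `&` v) by rewrite e x_le_b.
  by rewrite (disjoint_lexUr _ xa) lexI => /andP[].
move=> [ov xv].
have obv : is_open box (b `&` v) by apply: open_meet => //; exact: ob.
have ow : is_open box (a `|` (b `&` v)) by apply: open_join => //; exact: oa.
have s1 : a `|` (b `&` v) <= b by rewrite leUx (ltW ab) leIl.
case: (btw ow (leUl _ _) s1) => e.
  exfalso; apply: x_ne; apply: (@bot_of _ a); last exact: x_le_na.
  by rewrite -e; apply: lexUr; rewrite lexI x_le_b xv.
have : F (a `|` (b `&` v)) by rewrite e.
case/(Fpr _ _ oa obv) => // Fbv.
by apply: (Fup _ _ Fbv ov); exact: leIr.
Qed.

End Surj.

End Proofs.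

Lemma sig_eq_prop {A : Type} (P : A -> Prop) (u v : {z | P z}) :
  proj1_sig u = proj1_sig v -> u = v.
Proof.
case: u v => [x px] [y py] /= e; subst y; f_equal; exact: proof_irrelevance.
Qed.

Theorem corollary5p6 (d : Order.disp_t) (M : ctbDistrLatticeType d)
  (box : M -> M) :
  complete_lattice (M := M) -> MT_axioms box -> TD_algebra box ->
  homeomorphic (@at_open d M box) (@ptD_open d M box).
Proof.
move=> _ Hbox HTD.
pose f (z : atomT) : ptD box :=
  exist _ (Fx box (proj1_sig z)) (slicing_at Hbox HTD (proj2_sig z)).
have fsurj : forall F : ptD box, exists z, f z = F.
  move=> [F [hF [a [b [Fb Fa hab]]]]].
  exists (exist _ _ (x_atom Hbox HTD hab)); apply: sig_eq_prop => /=.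
  apply: functional_extensionality => v; apply: propositional_extensionality.
  by split => /(F_eq Hbox hab hF Fb Fa).
have finj : forall z1 z2, f z1 = f z2 -> z1 = z2.
  move=> [x hx] [y hy] e; apply: sig_eq_prop => /=.
  apply: (Fx_inj Hbox HTD hx hy).
  by have := f_equal (@proj1_sig _ _) e.
pose g (F : ptD box) : atomT := proj1_sig (constructive_indefinite_description _ (fsurj F)).
have gK : forall F, f (g F) = F.
  move=> F; rewrite /g; exact: (proj2_sig (constructive_indefinite_description _ (fsurj F))).
exists f; split.
- by apply: (Bijective (g := g)) => [z|F]; [apply: finj; rewrite gK | exact: gK].
- move=> V [a [oa hV]]; exists a; split => // z.
  rewrite (hV (f z)) /=; split; [by case | by move=> h; split].
- move=> U [u [ou hU]]; exists u; split => // F; split.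
    move=> [z Uz <-] /=; split => //; exact/hU.
  move=> Fu; exists (g F); last exact: gK.
  apply/hU; have := gK F; case: (g F) => x hx /= e.
  by rewrite -e in Fu; case: Fu.
Qed.
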